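(* Let $\mathcal G$ be a groupoid and let $\{\mathcal{G}_i\}_{i\in I}$ be its homogeneous components. Then there is an isomorphism of 2-groups $\mathbb{S}ym(\mathcal{G})\cong\prod_{i\in I}\mathbb{S}ym(\mathcal{G}_i)$, given by sending a self-equivalence (resp. natural isomorphism) to the family of its restrictions to the homogeneous components.
   Context: A homogeneous component of a groupoid $\mathcal G$ is the full subgroupoid formed by the union of all connected components of $\mathcal G$ whose objects have automorphism group isomorphic to a given group; $\mathcal G$ is the disjoint union of its homogeneous components. A 2-group is a monoidal groupoid in which every object has a weak tensor inverse; an isomorphism of 2-groups is a monoidal functor with a strict inverse monoidal functor. For a groupoid $\mathcal K$, $\mathbb{S}ym(\mathcal{K})$ is the 2-group whose objects are self-equivalences of $\mathcal K$ and whose morphisms are natural isomorphisms between them, with tensor product given by composition and horizontal composition. The product of 2-groups is the product groupoid with componentwise monoidal structure. *)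

(* Defs.v *)
From Stdlib Require Import FunctionalExtensionality ProofIrrelevance.

Set Implicit Arguments.
Unset Strict Implicit.

Record Groupoid := {
  ob :> Type;
  hom : ob -> ob -> Type;
  gid : forall x, hom x x;
  gcomp : forall x y z, hom y z -> hom x y -> hom x z;
  ginv : forall x y, hom x y -> hom y x;
  gassoc : forall x y z w (h : hom z w) (g : hom y z) (f : hom x y),
      gcomp h (gcomp g f) = gcomp (gcomp h g) f;
  gid_l : forall x y (f : hom x y), gcomp (gid y) f = f;
  gid_r : forall x y (f : hom x y), gcomp f (gid x) = f;
  ginv_l : forall x y (f : hom x y), gcomp (ginv f) f = gid x;
  ginv_r : forall x y (f : hom x y), gcomp f (ginv f) = gid y }.

Arguments hom {g0} x y : rename.
Arguments gid {g0} x : rename.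
Arguments gcomp {g0 x y z} _ _ : rename.
Arguments ginv {g0 x y} _ : rename.

Record Functor (C D : Groupoid) := {
  fobj :> C -> D;
  fmap : forall x y, hom x y -> hom (fobj x) (fobj y);
  fmap_id : forall x, fmap (gid x) = gid (fobj x);
  fmap_comp : forall x y z (g : hom y z) (f : hom x y),
      fmap (gcomp g f) = gcomp (fmap g) (fmap f) }.

Arguments fmap {C D} f {x y} _ : rename.

Definition fcomp (C D E : Groupoid) (F : Functor D E) (G : Functor C D)
  : Functor C E.
Proof.
  refine (@Build_Functor C E (fun x => F (G x))
            (fun x y f => fmap F (fmap G f)) _ _).
  - intros x. rewrite !fmap_id. reflexivity.
  - intros x y z g f. rewrite !fmap_comp. reflexivity.
Defined.

Definition fid (C : Groupoid) : Functor C C.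
Proof.
  refine (@Build_Functor C C (fun x => x) (fun x y f => f) _ _);
    reflexivity.
Defined.

Record NatTrans (C D : Groupoid) (F G : Functor C D) := {
  ntc :> forall x, hom (F x) (G x);
  ntnat : forall x y (f : hom x y),
      gcomp (ntc y) (fmap F f) = gcomp (fmap G f) (ntc x) }.

Lemma nt_eq (C D : Groupoid) (F G : Functor C D) (a b : NatTrans F G) :
  (forall x, a x = b x) -> a = b.
Proof.
  destruct a as [a Ha], b as [b Hb]; simpl; intros H.
  assert (a = b) by (apply functional_extensionality_dep; exact H).
  subst b. f_equal. apply proof_irrelevance.
Qed.

Definition ntid (C D : Groupoid) (F : Functor C D) : NatTrans F F.
Proof.
  refine (@Build_NatTrans C D F F (fun x => gid (F x)) _).
  intros. rewrite gid_l, gid_r. reflexivity.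
Defined.

Definition vcomp (C D : Groupoid) (F G H : Functor C D)
  (b : NatTrans G H) (a : NatTrans F G) : NatTrans F H.
Proof.
  refine (@Build_NatTrans C D F H (fun x => gcomp (b x) (a x)) _).
  intros x y f.
  rewrite <- gassoc, (ntnat a), gassoc, (ntnat b), <- gassoc. reflexivity.
Defined.

Definition ntinv (C D : Groupoid) (F G : Functor C D)
  (a : NatTrans F G) : NatTrans G F.
Proof.
  refine (@Build_NatTrans C D G F (fun x => ginv (a x)) _).
  intros x y f.
  transitivity (gcomp (gcomp (ginv (a y)) (gcomp (fmap G f) (a x)))
                      (ginv (a x))).
  - rewrite <- (gassoc (ginv (a y)) _ (ginv (a x))).
    rewrite <- (gassoc (fmap G f) (a x) (ginv (a x))), ginv_r, gid_r.
    reflexivity.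
  - rewrite <- (ntnat a), gassoc, ginv_l, gid_l. reflexivity.
Defined.

Definition hcomp (C D E : Groupoid) (F F' : Functor D E) (G G' : Functor C D)
  (a : NatTrans F F') (b : NatTrans G G') :
  NatTrans (fcomp F G) (fcomp F' G').
Proof.
  refine (@Build_NatTrans C E (fcomp F G) (fcomp F' G')
            (fun x => gcomp (a (G' x)) (fmap F (b x))) _).
  intros x y f; simpl.
  rewrite <- gassoc, <- fmap_comp, (ntnat b), fmap_comp, gassoc,
    (ntnat a), <- gassoc. reflexivity.
Defined.

Definition is_equiv (C : Groupoid) (F : Functor C C) : Prop :=
  exists G : Functor C C,
    inhabited (NatTrans (fcomp G F) (fid C)) /\
    inhabited (NatTrans (fcomp F G) (fid C)).

Definition nt_comp4 (C : Groupoid) (X1 X2 Y1 Y2 : Functor C C)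
  (a1 : NatTrans (fcomp X1 Y1) (fid C)) (a2 : NatTrans (fcomp X2 Y2) (fid C)) :
  NatTrans (fcomp (fcomp X2 X1) (fcomp Y1 Y2)) (fid C).
Proof.
  refine (@Build_NatTrans C C (fcomp (fcomp X2 X1) (fcomp Y1 Y2)) (fid C)
     (fun x => gcomp (a2 x) (fmap X2 (a1 (Y2 x)))) _).
  intros x y f; simpl.
  pose proof (ntnat a1 (fmap Y2 f)) as H1; simpl in H1.
  pose proof (ntnat a2 f) as H2; simpl in H2.
  rewrite <- gassoc, <- fmap_comp, H1, fmap_comp, gassoc, H2, <- gassoc.
  reflexivity.
Defined.

Lemma is_equiv_comp (C : Groupoid) (F1 F2 : Functor C C) :
  is_equiv F1 -> is_equiv F2 -> is_equiv (fcomp F1 F2).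
Proof.
  intros [G1 [[a1] [b1]]] [G2 [[a2] [b2]]].
  exists (fcomp G2 G1); split; constructor.
  - exact (nt_comp4 a1 a2).
  - exact (nt_comp4 b2 b1).
Qed.

Definition nt_idid (C : Groupoid) : NatTrans (fcomp (fid C) (fid C)) (fid C).
Proof.
  refine (@Build_NatTrans C C (fcomp (fid C) (fid C)) (fid C) (fun x => gid x) _).
  intros; simpl; rewrite gid_l, gid_r; reflexivity.
Defined.

Lemma is_equiv_id (C : Groupoid) : is_equiv (fid C).
Proof. exists (fid C); split; constructor; apply nt_idid. Qed.

Definition SymOb (K : Groupoid) := {F : Functor K K | is_equiv F}.

Definition SymG (K : Groupoid) : Groupoid.
Proof.
  refine (@Build_Groupoid (SymOb K)
            (fun A B => NatTrans (proj1_sig A) (proj1_sig B))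
            (fun A => ntid (proj1_sig A))
            (fun A B C b a => vcomp b a)
            (fun A B a => ntinv a) _ _ _ _ _);
  intros; apply nt_eq; intros; simpl.
  - apply gassoc.
  - apply gid_l.
  - apply gid_r.
  - apply ginv_l.
  - apply ginv_r.
Defined.

Record MonGpd := {
  mgpd :> Groupoid;
  tens : mgpd -> mgpd -> mgpd;
  tens_hom : forall a b c d, hom a b -> hom c d -> hom (tens a c) (tens b d);
  munit : mgpd;
  massoc : forall a b c, hom (tens (tens a b) c) (tens a (tens b c));
  mlunit : forall a, hom (tens munit a) a;
  mrunit : forall a, hom (tens a munit) a }.

Arguments tens {m} _ _.
Arguments tens_hom {m a b c d} _ _.
Arguments munit m : clear implicits.
Arguments massoc {m} a b c.
Arguments mlunit {m} a.
Arguments mrunit {m} a.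

Definition nt_assoc (C : Groupoid) (F1 F2 F3 : Functor C C) :
  NatTrans (fcomp (fcomp F1 F2) F3) (fcomp F1 (fcomp F2 F3)).
Proof.
  refine (@Build_NatTrans C C (fcomp (fcomp F1 F2) F3) (fcomp F1 (fcomp F2 F3))
            (fun x => gid (F1 (F2 (F3 x)))) _).
  intros; simpl; rewrite gid_l, gid_r; reflexivity.
Defined.

Definition nt_lunit (C : Groupoid) (F : Functor C C) :
  NatTrans (fcomp (fid C) F) F.
Proof.
  refine (@Build_NatTrans C C (fcomp (fid C) F) F (fun x => gid (F x)) _).
  intros; simpl; rewrite gid_l, gid_r; reflexivity.
Defined.

Definition nt_runit (C : Groupoid) (F : Functor C C) :
  NatTrans (fcomp F (fid C)) F.
Proof.
  refine (@Build_NatTrans C C (fcomp F (fid C)) F (fun x => gid (F x)) _).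
  intros; simpl; rewrite gid_l, gid_r; reflexivity.
Defined.

Definition SymM (K : Groupoid) : MonGpd :=
  @Build_MonGpd (SymG K)
    (fun A B => exist _ (fcomp (proj1_sig A) (proj1_sig B))
                  (is_equiv_comp (proj2_sig A) (proj2_sig B)))
    (fun A B C D a b => hcomp a b)
    (exist _ (fid K) (is_equiv_id K))
    (fun A B C => nt_assoc (proj1_sig A) (proj1_sig B) (proj1_sig C))
    (fun A => nt_lunit (proj1_sig A))
    (fun A => nt_runit (proj1_sig A)).

Definition ProdG (I : Type) (M : I -> Groupoid) : Groupoid.
Proof.
  refine (@Build_Groupoid (forall i, M i)
            (fun a b => forall i, hom (a i) (b i))
            (fun a i => gid (a i))
            (fun a b c g f i => gcomp (g i) (f i))
            (fun a b f i => ginv (f i)) _ _ _ _ _);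
  intros; apply functional_extensionality_dep; intros i.
  - apply gassoc.
  - apply gid_l.
  - apply gid_r.
  - apply ginv_l.
  - apply ginv_r.
Defined.

Definition ProdM (I : Type) (M : I -> MonGpd) : MonGpd :=
  @Build_MonGpd (ProdG (fun i => mgpd (M i)))
    (fun a b i => tens (a i) (b i))
    (fun a b c d f g i => tens_hom (f i) (g i))
    (fun i => munit (M i))
    (fun a b c i => massoc (a i) (b i) (c i))
    (fun a i => mlunit (a i))
    (fun a i => mrunit (a i)).

Record MonFunctor (M N : MonGpd) := {
  mf :> Functor M N;
  mf_mu : forall a b : M, hom (tens (mf a) (mf b)) (mf (tens a b));
  mf_eps : hom (munit N) (mf (munit M));
  mf_mu_nat : forall (a a' b b' : M) (f : hom a a') (g : hom b b'),
      gcomp (mf_mu a' b') (tens_hom (fmap mf f) (fmap mf g))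
      = gcomp (fmap mf (tens_hom f g)) (mf_mu a b);
  mf_assoc : forall a b c : M,
      gcomp (fmap mf (massoc a b c))
            (gcomp (mf_mu (tens a b) c) (tens_hom (mf_mu a b) (gid (mf c))))
      = gcomp (mf_mu a (tens b c))
              (gcomp (tens_hom (gid (mf a)) (mf_mu b c))
                     (massoc (mf a) (mf b) (mf c)));
  mf_lunit : forall a : M,
      gcomp (fmap mf (mlunit a))
            (gcomp (mf_mu (munit M) a) (tens_hom mf_eps (gid (mf a))))
      = mlunit (mf a);
  mf_runit : forall a : M,
      gcomp (fmap mf (mrunit a))
            (gcomp (mf_mu a (munit M)) (tens_hom (gid (mf a)) mf_eps))
      = mrunit (mf a) }.

Definition is_2group_iso (M N : MonGpd) (Phi : MonFunctor M N) : Prop :=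
  exists Psi : MonFunctor N M,
    fcomp (mf Psi) (mf Phi) = fid M /\ fcomp (mf Phi) (mf Psi) = fid N.

Definition SubG (G : Groupoid) (P : G -> Prop) : Groupoid.
Proof.
  refine (@Build_Groupoid {x : G | P x}
            (fun x y => hom (proj1_sig x) (proj1_sig y))
            (fun x => gid (proj1_sig x))
            (fun x y z g f => gcomp g f)
            (fun x y f => ginv f) _ _ _ _ _); intros.
  - apply gassoc.
  - apply gid_l.
  - apply gid_r.
  - apply ginv_l.
  - apply ginv_r.
Defined.

Definition aut_iso (G : Groupoid) (x y : G) : Prop :=
  exists (phi : hom x x -> hom y y) (psi : hom y y -> hom x x),
    (forall f, psi (phi f) = f) /\ (forall g, phi (psi g) = g) /\
    (forall f g, phi (gcomp f g) = gcomp (phi f) (phi g)).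

(* Index set of the homogeneous components: one for each isomorphism class
   of automorphism group occurring in G, represented by the predicate
   "Aut(y) is isomorphic to Aut(x)" for a representative x. *)
Definition HomogIdx (G : Groupoid) :=
  {P : G -> Prop | exists x : G, P = aut_iso x}.

Definition HomogComp (G : Groupoid) (i : HomogIdx G) : Groupoid :=
  SubG (proj1_sig i).

Definition restr (G : Groupoid) (P : G -> Prop) (F : Functor G G)
  (p : forall x, P x -> P (F x)) : Functor (SubG P) (SubG P).
Proof.
  refine (@Build_Functor (SubG P) (SubG P)
            (fun x => exist _ (F (proj1_sig x)) (p _ (proj2_sig x)))
            (fun x y f => fmap F f) _ _); intros; simpl.
  - apply fmap_id.
  - apply fmap_comp.
Defined.

Definition restr_nt (G : Groupoid) (P : G -> Prop) (F F' : Functor G G)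
  (p : forall x, P x -> P (F x)) (p' : forall x, P x -> P (F' x))
  (a : NatTrans F F') : NatTrans (restr p) (restr p').
Proof.
  refine (@Build_NatTrans (SubG P) (SubG P) (restr p) (restr p')
            (fun x => a (proj1_sig x)) _).
  intros; simpl. apply (ntnat a).
Defined.

Definition PresComps (G : Groupoid) : Prop :=
  forall F : Functor G G, is_equiv F ->
  forall (i : HomogIdx G) (x : G), proj1_sig i x -> proj1_sig i (F x).

Definition restr_nt2 (G : Groupoid) (P : G -> Prop) (F1 F2 : Functor G G)
  (p1 : forall x, P x -> P (F1 x)) (p2 : forall x, P x -> P (F2 x))
  (a : NatTrans (fcomp F1 F2) (fid G)) :
  NatTrans (fcomp (restr p1) (restr p2)) (fid (SubG P)).
Proof.
  refine (@Build_NatTrans (SubG P) (SubG P)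
            (fcomp (restr p1) (restr p2)) (fid (SubG P))
            (fun x => a (proj1_sig x)) _).
  intros x y f; simpl. exact (ntnat a f).
Defined.

Lemma restr_equiv (G : Groupoid) (pres : PresComps G) (F : Functor G G)
  (hF : is_equiv F) (i : HomogIdx G) :
  is_equiv (restr (pres F hF i)).
Proof.
  destruct hF as [H [[a] [b]]] eqn:E.
  assert (hH : is_equiv H) by (exists F; split; constructor; assumption).
  exists (restr (pres H hH i)); split; constructor.
  - exact (restr_nt2 _ _ a).
  - exact (restr_nt2 _ _ b).
Qed.

Definition Restriction (G : Groupoid) (pres : PresComps G) :
  Functor (SymM G) (ProdM (fun i : HomogIdx G => SymM (HomogComp i))).
Proof.
  refine (@Build_Functor (SymM G)
            (ProdM (fun i : HomogIdx G => SymM (HomogComp i)))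
     (fun F i => exist _ (restr (pres _ (proj2_sig F) i))
                          (restr_equiv pres (proj2_sig F) i))
     (fun F F' a i => restr_nt _ _ a) _ _);
  intros; apply functional_extensionality_dep; intros i;
  apply nt_eq; intros; reflexivity.
Defined.

(* Main.v *)
Require Import Defs.
From Stdlib Require Import FunctionalExtensionality ProofIrrelevance ClassicalEpsilon PropExtensionality.
Set Implicit Arguments.
Unset Strict Implicit.

Definition eqhom (C : Groupoid) (u v : C) (e : u = v) : hom u v :=
  match e in _ = w return hom u w with eq_refl => gid u end.
Arguments eqhom {C u v} e.

Lemma eqhom_uip (C : Groupoid) (u : C) (e : u = u) : eqhom e = gid u.
Proof. rewrite (proof_irrelevance _ e eq_refl). reflexivity. Qed.

Lemma eqhom_pi (C : Groupoid) (u v : C) (e1 e2 : u = v) : eqhom e1 = eqhom e2.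
Proof. rewrite (proof_irrelevance _ e1 e2). reflexivity. Qed.

Lemma eqhom_trans (C : Groupoid) (u v w : C) (e1 : u = v) (e2 : v = w) :
  gcomp (eqhom e2) (eqhom e1) = eqhom (eq_trans e1 e2).
Proof. destruct e1, e2; simpl. apply gid_l. Qed.

Lemma eqhom_trans_r (C : Groupoid) (u v w z : C) (e1 : u = v) (e2 : v = w) (k : hom z u) :
  gcomp (eqhom e2) (gcomp (eqhom e1) k) = gcomp (eqhom (eq_trans e1 e2)) k.
Proof. rewrite gassoc, eqhom_trans. reflexivity. Qed.

Lemma fmap_eqhom (C D : Groupoid) (F : Functor C D) (u v : C) (e : u = v) :
  fmap F (eqhom e) = eqhom (f_equal F e).
Proof. destruct e; simpl. apply fmap_id. Qed.

Lemma functor_eq' (C D : Groupoid) (F G : Functor C D) (e : forall x, F x = G x) :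
  (forall x y (f : hom x y),
      fmap G f = gcomp (eqhom (e y)) (gcomp (fmap F f) (eqhom (eq_sym (e x))))) ->
  F = G.
Proof.
  destruct F as [F Fm F1 F2], G as [G Gm G1 G2]; simpl in *.
  assert (E : F = G) by (apply functional_extensionality; exact e).
  subst G. intros H.
  assert (Em : Fm = Gm).
  { apply functional_extensionality_dep; intro x.
    apply functional_extensionality_dep; intro y.
    apply functional_extensionality; intro f.
    rewrite H, !eqhom_uip, gid_l, gid_r. reflexivity. }
  subst Gm. f_equal; apply proof_irrelevance.
Qed.

Ltac eqnorm :=
  repeat rewrite <- gassoc;
  repeat first [ rewrite eqhom_trans_r | rewrite eqhom_trans | rewrite eqhom_uip
               | rewrite gid_l | rewrite gid_r ].

Lemma aut_iso_refl (G : Groupoid) (x : G) : aut_iso x x.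
Proof. exists (fun f => f), (fun f => f). repeat split. Qed.

Lemma aut_iso_sym (G : Groupoid) (x y : G) : aut_iso x y -> aut_iso y x.
Proof.
  intros [phi [psi [H1 [H2 H3]]]]. exists psi, phi. repeat split; auto.
  intros f g. rewrite <- (H2 f), <- (H2 g), <- H3, !H1. reflexivity.
Qed.

Lemma aut_iso_trans (G : Groupoid) (x y z : G) : aut_iso x y -> aut_iso y z -> aut_iso x z.
Proof.
  intros [phi [psi [H1 [H2 H3]]]] [phi' [psi' [H1' [H2' H3']]]].
  exists (fun f => phi' (phi f)), (fun f => psi (psi' f)). repeat split.
  - intros f. rewrite H1', H1. reflexivity.
  - intros f. rewrite H2, H2'. reflexivity.
  - intros f g. rewrite H3, H3'. reflexivity.
Qed.

Lemma hom_aut_iso (G : Groupoid) (x y : G) (f : hom x y) : aut_iso x y.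
Proof.
  exists (fun g => gcomp f (gcomp g (ginv f))), (fun h => gcomp (ginv f) (gcomp h f)).
  repeat split.
  - intros g. rewrite !gassoc, ginv_l, gid_l, <- gassoc, ginv_l, gid_r. reflexivity.
  - intros g. rewrite !gassoc, ginv_r, gid_l, <- gassoc, ginv_r, gid_r. reflexivity.
  - intros g h. rewrite !gassoc. f_equal. rewrite <- !gassoc. f_equal. f_equal.
    rewrite (gassoc (ginv f) f), ginv_l, gid_l. reflexivity.
Qed.

Ltac fin := repeat first [ reflexivity | apply eqhom_pi | f_equal ].

Lemma sandwich (C : Groupoid) (b c : C) (u u' : hom b c) (p : hom c c) (q : hom b b)
  (Hp : p = eqhom (@eq_refl _ c)) (Hq : q = eqhom (@eq_refl _ b)) (Hu : u = u') :
  u = gcomp p (gcomp u' q).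
Proof. subst. simpl. rewrite gid_l, gid_r. reflexivity. Qed.

Lemma conj3 (C : Groupoid) (b c b' c' : C) (u : hom b c) (v : hom b' c') (p : hom c' c) (q : hom b b')
  (e1 : c' = c) (e2 : b = b') (e3 : c = c') (e4 : b' = b)
  (Hp : p = eqhom e1) (Hq : q = eqhom e2) (Hv : v = gcomp (eqhom e3) (gcomp u (eqhom e4))) :
  u = gcomp p (gcomp v q).
Proof. subst p q v. eqnorm. reflexivity. Qed.
Definition idx (G : Groupoid) (x : G) : HomogIdx G :=
  exist _ (aut_iso x) (ex_intro _ x eq_refl).

Lemma idx_eq (G : Groupoid) (i : HomogIdx G) (x : G) : proj1_sig i x -> i = idx x.
Proof.
  destruct i as [P HP]; simpl; intros h.
  assert (E : P = aut_iso x).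
  { destruct HP as [x0 ->]. apply functional_extensionality; intro y.
    apply propositional_extensionality; split; intro H.
    - exact (aut_iso_trans (aut_iso_sym h) H).
    - exact (aut_iso_trans h H). }
  subst P. unfold idx. f_equal. apply proof_irrelevance.
Qed.

Definition hx (G : Groupoid) (x : G) : proj1_sig (idx x) x := aut_iso_refl x.

Lemma equiv_aut_iso (G : Groupoid) (F : Functor G G) : is_equiv F -> forall x, aut_iso x (F x).
Proof.
  intros [H [[a] [b]]] x.
  assert (faithH : forall u v (p q : hom u v), fmap H p = fmap H q -> p = q).
  { intros u v p q E.
    assert (Hp : forall r : hom u v, r = gcomp (b v) (gcomp (fmap F (fmap H r)) (ginv (b u)))).
    { intros r. pose proof (ntnat b r) as N; simpl in N.
      transitivity (gcomp (gcomp r (b u)) (ginv (b u))).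
      - rewrite <- gassoc, ginv_r, gid_r. reflexivity.
      - rewrite gassoc. f_equal. symmetry. exact N. }
    rewrite (Hp p), (Hp q), E. reflexivity. }
  assert (Na : forall (k : hom x x), fmap H (fmap F k) = gcomp (ginv (a x)) (gcomp k (a x))).
  { intros k. pose proof (ntnat a k) as N; simpl in N.
    transitivity (gcomp (ginv (a x)) (gcomp (a x) (fmap H (fmap F k)))).
    - rewrite gassoc, ginv_l, gid_l. reflexivity.
    - f_equal. exact N. }
  exists (fun f => fmap F f), (fun g => gcomp (a x) (gcomp (fmap H g) (ginv (a x)))).
  repeat split.
  - intros f. rewrite Na, !gassoc, ginv_r, gid_l, <- gassoc, ginv_r, gid_r. reflexivity.
  - intros g. apply faithH. rewrite Na, !gassoc, ginv_l, gid_l, <- gassoc, ginv_l, gid_r.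
    reflexivity.
  - intros f g. apply fmap_comp.
Qed.

Lemma the_pres (G : Groupoid) : PresComps G.
Proof.
  intros F hF [P [x0 E]] x h; simpl in *. subst P.
  exact (aut_iso_trans h (equiv_aut_iso hF x)).
Qed.
Definition PhiMu (G : Groupoid) (pres : PresComps G) (A B : SymM G) :
  hom (tens (Restriction pres A) (Restriction pres B)) (Restriction pres (tens A B)).
Proof.
  intros i. simpl. unshelve econstructor; [intro s; exact (gid (proj1_sig A (proj1_sig B (proj1_sig s))))|].
  intros; simpl. rewrite gid_l, gid_r. reflexivity.
Defined.

Definition PhiEps (G : Groupoid) (pres : PresComps G) :
  hom (munit (ProdM (fun i : HomogIdx G => SymM (HomogComp i)))) (Restriction pres (munit (SymM G))).
Proof.
  intros i. simpl. unshelve econstructor; [intro s; exact (gid (proj1_sig s))|].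
  intros; simpl. rewrite gid_l, gid_r. reflexivity.
Defined.

Definition PhiM (G : Groupoid) (pres : PresComps G) :
  MonFunctor (SymM G) (ProdM (fun i : HomogIdx G => SymM (HomogComp i))).
Proof.
  refine (@Build_MonFunctor _ _ (Restriction pres) (PhiMu pres) (PhiEps pres) _ _ _ _);
  intros; apply functional_extensionality_dep; intro i; apply nt_eq; intro s; simpl;
  rewrite ?fmap_id, ?gid_l, ?gid_r; reflexivity.
Defined.
Definition Fam (G : Groupoid) :=
  forall i : HomogIdx G, Functor (SubG (proj1_sig i)) (SubG (proj1_sig i)).

Definition gob (G : Groupoid) (F : Fam G) (x : G) : G :=
  proj1_sig (F (idx x) (exist (proj1_sig (idx x)) x (hx x))).

Lemma gob_any (G : Groupoid) (F : Fam G) (i : HomogIdx G) (s : SubG (proj1_sig i)) :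
  proj1_sig (F i s) = gob F (proj1_sig s).
Proof.
  destruct s as [x h]. pose proof (idx_eq h) as E. subst i. simpl. unfold gob.
  rewrite (proof_irrelevance _ h (hx x)). reflexivity.
Qed.

Lemma fmap_sub_id (G : Groupoid) (P : G -> Prop) (F : Functor (SubG P) (SubG P)) (x : G) (hx : P x) :
  @fmap _ _ F (exist P x hx) (exist P x hx) (@gid G x) = @gid G (proj1_sig (F (exist P x hx))).
Proof. exact (fmap_id F (exist P x hx)). Qed.

Lemma fmap_sub_comp (G : Groupoid) (P : G -> Prop) (F : Functor (SubG P) (SubG P)) (x y z : G)
  (hx : P x) (hy : P y) (hz : P z) (g : hom y z) (f : hom x y) :
  @fmap _ _ F (exist P x hx) (exist P z hz) (@gcomp G x y z g f) =
  @gcomp G _ _ _ (@fmap _ _ F (exist P y hy) (exist P z hz) g) (@fmap _ _ F (exist P x hx) (exist P y hy) f).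
Proof. exact (@fmap_comp _ _ F (exist P x hx) (exist P y hy) (exist P z hz) g f). Qed.

Lemma ntnat_sub (G : Groupoid) (P : G -> Prop) (F F' : Functor (SubG P) (SubG P))
  (a : NatTrans F F') (x y : G) (hx : P x) (hy : P y) (f : hom x y) :
  @gcomp G _ _ _ (a (exist P y hy)) (@fmap _ _ F (exist P x hx) (exist P y hy) f) =
  @gcomp G _ _ _ (@fmap _ _ F' (exist P x hx) (exist P y hy) f) (a (exist P x hx)).
Proof. exact (@ntnat _ _ _ _ a (exist P x hx) (exist P y hy) f). Qed.

Definition gfmap (G : Groupoid) (F : Fam G) (x y : G) (f : hom x y) : hom (gob F x) (gob F y) :=
  gcomp (eqhom (@gob_any G F (idx x) (exist (proj1_sig (idx x)) y (hom_aut_iso f))))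
        (@fmap _ _ (F (idx x)) (exist (proj1_sig (idx x)) x (hx x)) (exist (proj1_sig (idx x)) y (hom_aut_iso f)) f).

Lemma gfmap_any (G : Groupoid) (F : Fam G) (i : HomogIdx G) (s t : SubG (proj1_sig i))
  (f : @hom G (proj1_sig s) (proj1_sig t)) :
  gfmap F f = @gcomp G _ _ _ (eqhom (gob_any F t)) (@gcomp G _ _ _ (@fmap _ _ (F i) s t f) (eqhom (eq_sym (gob_any F s)))).
Proof.
  destruct s as [x h], t as [y k]. simpl in f. pose proof (idx_eq h) as E. subst i.
  unfold gfmap. rewrite (proof_irrelevance _ h (hx x)), (proof_irrelevance _ k (hom_aut_iso f)).
  rewrite eqhom_uip, gid_r. reflexivity.
Qed.

Lemma gfmap_at (G : Groupoid) (F : Fam G) (i : HomogIdx G) (x y : G) (h : proj1_sig i x) (k : proj1_sig i y)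
  (f : hom x y) :
  gfmap F f = @gcomp G _ _ _ (eqhom (gob_any F (exist (proj1_sig i) y k)))
     (@gcomp G _ _ _ (@fmap _ _ (F i) (exist (proj1_sig i) x h) (exist (proj1_sig i) y k) f) (eqhom (eq_sym (gob_any F (exist (proj1_sig i) x h))))).
Proof. exact (@gfmap_any G F i (exist (proj1_sig i) x h) (exist (proj1_sig i) y k) f). Qed.
Lemma gfmap_id (G : Groupoid) (F : Fam G) (x : G) : gfmap F (gid x) = gid (gob F x).
Proof.
  rewrite (@gfmap_at G F (idx x) x x (hx x) (hx x) (gid x)).
  rewrite fmap_sub_id. eqnorm. reflexivity.
Qed.

Lemma gfmap_comp (G : Groupoid) (F : Fam G) (x y z : G) (g : hom y z) (f : hom x y) :
  gfmap F (gcomp g f) = gcomp (gfmap F g) (gfmap F f).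
Proof.
  rewrite (@gfmap_at G F (idx x) x z (hx x) (hom_aut_iso (gcomp g f)) (gcomp g f)).
  rewrite (@gfmap_at G F (idx x) x y (hx x) (hom_aut_iso f) f).
  rewrite (@gfmap_at G F (idx x) y z (hom_aut_iso f) (hom_aut_iso (gcomp g f)) g).
  rewrite (@fmap_sub_comp G _ (F (idx x)) x y z (hx x) (hom_aut_iso f) (hom_aut_iso (gcomp g f)) g f).
  eqnorm. reflexivity.
Qed.

Definition glue (G : Groupoid) (F : Fam G) : Functor G G :=
  @Build_Functor G G (gob F) (@gfmap G F) (@gfmap_id G F) (@gfmap_comp G F).

Definition gnt_c (G : Groupoid) (F F' : Fam G) (a : forall i, NatTrans (F i) (F' i)) (x : G) :
  hom (gob F x) (gob F' x) := a (idx x) (exist (proj1_sig (idx x)) x (hx x)).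

Lemma gnt_any (G : Groupoid) (F F' : Fam G) (a : forall i, NatTrans (F i) (F' i))
  (i : HomogIdx G) (x : G) (h : proj1_sig i x) :
  gnt_c a x = @gcomp G _ _ _ (eqhom (gob_any F' (exist (proj1_sig i) x h))) (@gcomp G _ _ _ (a i (exist (proj1_sig i) x h)) (eqhom (eq_sym (gob_any F (exist (proj1_sig i) x h))))).
Proof. pose proof (idx_eq h) as E. subst i.
  rewrite (proof_irrelevance _ h (hx x)). simpl.
  rewrite !eqhom_uip, gid_l, gid_r. reflexivity.
Qed.

Definition glue_nt (G : Groupoid) (F F' : Fam G) (a : forall i, NatTrans (F i) (F' i)) :
  NatTrans (glue F) (glue F').
Proof.
  refine (@Build_NatTrans G G (glue F) (glue F') (gnt_c a) _).
  intros x y f. simpl.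
  rewrite (@gfmap_at G F (idx x) x y (hx x) (hom_aut_iso f) f), (@gfmap_at G F' (idx x) x y (hx x) (hom_aut_iso f) f).
  rewrite (@gnt_any G F F' a (idx x) y (hom_aut_iso f)), (@gnt_any G F F' a (idx x) x (hx x)).
  eqnorm. f_equal. exact (ntnat_sub (a (idx x)) (hx x) (hom_aut_iso f) f).
Defined.
Lemma gfmap_eqhom (G : Groupoid) (F : Fam G) (x y : G) (e : x = y) :
  gfmap F (eqhom e) = eqhom (f_equal (gob F) e).
Proof. destruct e. exact (gfmap_id F x). Qed.

Definition famcomp (G : Groupoid) (F F' : Fam G) : Fam G := fun i => fcomp (F i) (F' i).
Definition famid (G : Groupoid) : Fam G := fun i => fid _.

Definition gmu_c (G : Groupoid) (F F' : Fam G) (x : G) :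
  hom (gob F (gob F' x)) (gob (famcomp F F') x) :=
  eqhom (eq_sym (gob_any F (F' (idx x) (exist (proj1_sig (idx x)) x (hx x))))).

Definition glue_mu (G : Groupoid) (F F' : Fam G) :
  NatTrans (fcomp (glue F) (glue F')) (glue (famcomp F F')).
Proof.
  refine (@Build_NatTrans G G (fcomp (glue F) (glue F')) (glue (famcomp F F')) (gmu_c F F') _).
  intros x y f. simpl. unfold gmu_c.
  rewrite (@gfmap_at G F' (idx x) x y (hx x) (hom_aut_iso f) f).
  rewrite (@gfmap_at G (famcomp F F') (idx x) x y (hx x) (hom_aut_iso f) f).
  rewrite !gfmap_comp, !gfmap_eqhom.
  rewrite (@gfmap_any G F (idx x)).
  unfold famcomp; simpl.
  eqnorm. fin.
Defined.

Lemma gnt_any_s (G : Groupoid) (F F' : Fam G) (a : forall i, NatTrans (F i) (F' i))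
  (i : HomogIdx G) (s : SubG (proj1_sig i)) :
  gnt_c a (proj1_sig s) = @gcomp G _ _ _ (eqhom (gob_any F' s)) (@gcomp G _ _ _ (a i s) (eqhom (eq_sym (gob_any F s)))).
Proof. destruct s as [x h]. exact (gnt_any a h). Qed.

Lemma gnt_gob (G : Groupoid) (F F' F1 : Fam G) (a : forall i, NatTrans (F i) (F' i)) (x : G) :
  gnt_c a (gob F1 x) =
  @gcomp G _ _ _ (eqhom (gob_any F' (F1 (idx x) (exist (proj1_sig (idx x)) x (hx x)))))
     (@gcomp G _ _ _ (a (idx x) (F1 (idx x) (exist (proj1_sig (idx x)) x (hx x))))
        (eqhom (eq_sym (gob_any F (F1 (idx x) (exist (proj1_sig (idx x)) x (hx x))))))).
Proof. exact (gnt_any_s a (F1 (idx x) (exist (proj1_sig (idx x)) x (hx x)))). Qed.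

Lemma gfmap_gob (G : Groupoid) (F F1 F2 : Fam G) (x : G) (f : hom (gob F1 x) (gob F2 x)) :
  gfmap F f =
  @gcomp G _ _ _ (eqhom (gob_any F (F2 (idx x) (exist (proj1_sig (idx x)) x (hx x)))))
    (@gcomp G _ _ _ (@fmap _ _ (F (idx x)) (F1 (idx x) (exist (proj1_sig (idx x)) x (hx x)))
                                (F2 (idx x) (exist (proj1_sig (idx x)) x (hx x))) f)
       (eqhom (eq_sym (gob_any F (F1 (idx x) (exist (proj1_sig (idx x)) x (hx x))))))).
Proof. exact (@gfmap_any G F (idx x) (F1 (idx x) (exist (proj1_sig (idx x)) x (hx x))) (F2 (idx x) (exist (proj1_sig (idx x)) x (hx x))) f). Qed.
Lemma gfmap_famid (G : Groupoid) (x y : G) (f : hom x y) : gfmap (@famid G) f = f.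
Proof.
  rewrite (@gfmap_at G (@famid G) (idx x) x y (hx x) (hom_aut_iso f) f).
  simpl. eqnorm. reflexivity.
Qed.

Definition glue_eps (G : Groupoid) : NatTrans (fid G) (glue (@famid G)).
Proof.
  refine (@Build_NatTrans G G (fid G) (glue (@famid G)) (fun x => gid x) _).
  intros x y f. simpl. rewrite gfmap_famid, gid_l, gid_r. reflexivity.
Defined.

Definition inh_pick (A : Type) (h : inhabited A) : A :=
  proj1_sig (constructive_indefinite_description (fun _ : A => True)
     (match h with inhabits a => ex_intro _ a I end)).

Lemma glue_equiv (G : Groupoid) (F : Fam G) : (forall i, is_equiv (F i)) -> is_equiv (glue F).
Proof.
  intros hF.
  pose (H := fun i => proj1_sig (constructive_indefinite_description _ (hF i))).
  assert (hH : forall i, inhabited (NatTrans (fcomp (H i) (F i)) (fid _)) /\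
                        inhabited (NatTrans (fcomp (F i) (H i)) (fid _))).
  { intros i. exact (proj2_sig (constructive_indefinite_description _ (hF i))). }
  pose (a := fun i => inh_pick (proj1 (hH i))).
  pose (b := fun i => inh_pick (proj2 (hH i))).
  exists (glue H). split; constructor.
  - exact (vcomp (ntinv (glue_eps G)) (vcomp (@glue_nt G (famcomp H F) (@famid G) a) (glue_mu H F))).
  - exact (vcomp (ntinv (glue_eps G)) (vcomp (@glue_nt G (famcomp F H) (@famid G) b) (glue_mu F H))).
Qed.

Definition PFam (G : Groupoid) (a : ProdM (fun i : HomogIdx G => SymM (HomogComp i))) : Fam G :=
  fun i => proj1_sig (a i).

Definition PsiOb (G : Groupoid) (a : ProdM (fun i : HomogIdx G => SymM (HomogComp i))) : SymM G :=
  exist _ (glue (PFam a)) (glue_equiv (fun i => proj2_sig (a i))).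

Definition PsiF (G : Groupoid) : Functor (ProdM (fun i : HomogIdx G => SymM (HomogComp i))) (SymM G).
Proof.
  refine (@Build_Functor _ (SymM G) (@PsiOb G) (fun a b f => @glue_nt G (PFam a) (PFam b) f) _ _);
  intros; apply nt_eq; intro w0; reflexivity.
Defined.
Ltac red_sub := cbn [gnt_c gmu_c ntc nt_assoc nt_lunit nt_runit hcomp gid gcomp fmap SubG fcomp fid PFam HomogComp proj1_sig glue_eps ntid].

Definition PsiM (G : Groupoid) :
  MonFunctor (ProdM (fun i : HomogIdx G => SymM (HomogComp i))) (SymM G).
Proof.
  refine (@Build_MonFunctor _ (SymM G) (PsiF G) (fun a b => glue_mu (PFam a) (PFam b)) (glue_eps G) _ _ _ _).
  - intros. apply nt_eq; intro x. simpl.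
    rewrite (@gnt_gob G (PFam a) (PFam a') (PFam b') f x).
    rewrite (@gfmap_gob G (PFam a) (PFam b) (PFam b') x).
    unfold gnt_c, gmu_c. red_sub.
    eqnorm. first [ solve [fin] | solve [etransitivity; [apply gid_l|]; fin] | solve [eapply eq_trans; [|apply gassoc]; fin] ].
  - intros. apply nt_eq; intro x. simpl. unfold gnt_c, gmu_c. red_sub. rewrite ?gfmap_id, ?gfmap_eqhom. eqnorm. first [ solve [fin] | solve [etransitivity; [apply gid_l|]; fin] | solve [eapply eq_trans; [|apply gassoc]; fin] ].
  - intros. apply nt_eq; intro x. simpl. unfold gnt_c, gmu_c. red_sub. rewrite ?gfmap_id, ?gfmap_eqhom. eqnorm. first [ solve [fin] | solve [etransitivity; [apply gid_l|]; fin] | solve [eapply eq_trans; [|apply gassoc]; fin] ].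
  - intros. apply nt_eq; intro x. simpl. unfold gnt_c, gmu_c. red_sub. rewrite ?gfmap_id, ?gfmap_eqhom. eqnorm. first [ solve [fin] | solve [etransitivity; [apply gid_l|]; fin] | solve [eapply eq_trans; [|apply gassoc]; fin] ].
Defined.
Lemma eqhom_prod (I : Type) (M : I -> Groupoid) (a b : ProdG M) (e : a = b) (i : I)
  (e' : a i = b i) : eqhom e i = eqhom e'.
Proof. destruct e. simpl. rewrite eqhom_uip. reflexivity. Qed.

Lemma eqhom_symg (K : Groupoid) (A B : SymG K) (e : A = B) (x : K)
  (e' : proj1_sig A x = proj1_sig B x) : ntc (eqhom e) x = eqhom e'.
Proof. destruct e. simpl. rewrite eqhom_uip. reflexivity. Qed.

Lemma eqhom_sub (G : Groupoid) (P : G -> Prop) (s t : SubG P) (e : s = t)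
  (e' : proj1_sig s = proj1_sig t) : @eqhom (SubG P) s t e = @eqhom G _ _ e'.
Proof. destruct e. simpl. rewrite eqhom_uip. reflexivity. Qed.

Lemma sig_eq (T : Type) (P : T -> Prop) (u v : sig P) : proj1_sig u = proj1_sig v -> u = v.
Proof.
  destruct u as [u pu], v as [v pv]; simpl; intros E. subst v. f_equal. apply proof_irrelevance.
Qed.

Lemma glue_restr (G : Groupoid) (pres : PresComps G) (F : Functor G G) (hF : is_equiv F) :
  glue (fun i => restr (pres F hF i)) = F.
Proof.
  refine (@functor_eq' G G (glue (fun i => restr (pres F hF i))) F (fun x => @eq_refl G (F x)) _).
  intros x y f. cbn [fmap glue].
  rewrite (@gfmap_at G _ (idx x) x y (hx x) (hom_aut_iso f) f).
  simpl. eqnorm. reflexivity.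
Qed.

Lemma inv1 (G : Groupoid) (pres : PresComps G) :
  fcomp (mf (PsiM G)) (mf (PhiM pres)) = fid (SymM G).
Proof.
  assert (e : forall A : SymM G, fcomp (mf (PsiM G)) (mf (PhiM pres)) A = fid (SymM G) A).
  { intros [F hF]. apply sig_eq. simpl. apply glue_restr. }
  refine (@functor_eq' _ _ _ _ e _).
  intros A B f. apply nt_eq; intro x. simpl.
  apply sandwich.
  - exact (@eqhom_symg G _ _ (e B) x _).
  - exact (@eqhom_symg G _ _ (eq_sym (e A)) x _).
  - reflexivity.
Qed.
Lemma prod_sym_sub (G : Groupoid) (a b : ProdG (fun i : HomogIdx G => SymG (HomogComp i))) (e : a = b)
  (i : HomogIdx G) (s : HomogComp i)
  (e' : proj1_sig (proj1_sig (a i) s) = proj1_sig (proj1_sig (b i) s)) :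
  ntc (eqhom e i) s = @eqhom G _ _ e'.
Proof. destruct e. simpl. rewrite eqhom_uip. reflexivity. Qed.

Lemma sub_conj (G : Groupoid) (P : G -> Prop) (s t s' t' : SubG P) (es : s = s') (et : t = t')
  (u : hom s t) :
  @gcomp (SubG P) _ _ _ (eqhom et) (@gcomp (SubG P) _ _ _ u (eqhom (eq_sym es))) =
  @gcomp G _ _ _ (eqhom (f_equal (@proj1_sig _ _) et)) (@gcomp G _ _ _ u (eqhom (eq_sym (f_equal (@proj1_sig _ _) es)))).
Proof. destruct es, et. simpl. reflexivity. Qed.

Lemma restr_glue_eq (G : Groupoid) (F : Fam G) (i : HomogIdx G)
  (p : forall x, proj1_sig i x -> proj1_sig i (glue F x)) : restr p = F i.
Proof.
  refine (@functor_eq' _ _ (restr p) (F i) (fun s => @sig_eq G (proj1_sig i) (restr p s) (F i s) (eq_sym (gob_any F s))) _).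
  intros s t f. rewrite sub_conj. cbn [fmap restr glue].
  rewrite (@gfmap_any G F i s t f).
  eqnorm. reflexivity.
Qed.

Lemma inv2 (G : Groupoid) (pres : PresComps G) :
  fcomp (mf (PhiM pres)) (mf (PsiM G)) = fid (ProdM (fun i : HomogIdx G => SymM (HomogComp i))).
Proof.
  assert (e : forall a : ProdM (fun i : HomogIdx G => SymM (HomogComp i)),
             fcomp (mf (PhiM pres)) (mf (PsiM G)) a = a).
  { intros a. apply functional_extensionality_dep; intro i. apply sig_eq. simpl.
    apply restr_glue_eq. }
  refine (@functor_eq' _ _ (fcomp (mf (PhiM pres)) (mf (PsiM G))) (fid _) e _).
  intros a b f. apply functional_extensionality_dep; intro i. apply nt_eq; intro s.
  simpl.
  refine (@conj3 G _ _ _ _ _ _ _ _ _ _ _ _ _ _ _).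
  - exact (@prod_sym_sub G _ _ (e b) i s (f_equal (fun a0 : ProdG (fun i : HomogIdx G => SymG (HomogComp i)) => proj1_sig (proj1_sig (a0 i) s)) (e b))).
  - exact (@prod_sym_sub G _ _ (eq_sym (e a)) i s (f_equal (fun a0 : ProdG (fun i : HomogIdx G => SymG (HomogComp i)) => proj1_sig (proj1_sig (a0 i) s)) (eq_sym (e a)))).
  - exact (@gnt_any_s G (PFam a) (PFam b) f i s).
Qed.

Theorem theorem4p10 (G : Groupoid) :
  exists pres : PresComps G,
  exists Phi : MonFunctor (SymM G)
                 (ProdM (fun i : HomogIdx G => SymM (HomogComp i))),
    mf Phi = Restriction pres /\ is_2group_iso Phi.
Proof.
  exists (@the_pres G), (PhiM (@the_pres G)). split.
  - reflexivity.
  - exists (PsiM G). split.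
    + apply inv1.
    + apply inv2.
Qed.
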